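(* For $n\geq 1$, let $G_n$ be the graph with vertex set $\{0,1,\ldots,n\}$ in which, for each $i\in\{0,\ldots,n-1\}$, there are $2i+1$ parallel edges $e_{i,1},\ldots,e_{i,2i+1}$ between $i$ and $i+1$ (and no other edges). Let $0<a<b$ and let the resistances $r_{i,k}=r_{e_{i,k}}$ be independent, each distributed according to $\frac12\delta_a+\frac12\delta_b$. Then, as $n\to\infty$, $$\mathbb{E}\big(\mathcal{R}_r(0\leftrightarrow n)\big)=\Theta(\log n)\quad\text{and}\quad \operatorname{Var}\big(\mathcal{R}_r(0\leftrightarrow n)\big)=\Theta(1),$$ where $\mathcal{R}_r(0\leftrightarrow n)=\sum_{i=0}^{n-1}\Big(\sum_{k=1}^{2i+1}\frac{1}{r_{i,k}}\Big)^{-1}$ is the effective resistance between $0$ and $n$.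
   Context: $f(n)=\Theta(g(n))$ means there are constants $0<c\le C$ such that $c\,g(n)\le f(n)\le C\,g(n)$ for all large $n$. *)

(* Defs.v *)
From HB Require Import structures.
From mathcomp Require Import all_boot all_order all_algebra.
From mathcomp Require Import reals exp.
Set Implicit Arguments. Unset Strict Implicit. Unset Printing Implicit Defensive.
Import Order.TTheory GRing.Theory Num.Theory.
Local Open Scope ring_scope.

(* A configuration of the resistances on G_n: for each level i < n and each
   parallel edge k < 2i+1 between i and i+1, a boolean choosing the
   resistance (false -> a, true -> b). *)
Definition config (n : nat) : finType :=
  {dffun forall i : 'I_n, {ffun 'I_(2 * i + 1) -> bool}}.

Definition resist {R : realType} (a b : R) (n : nat) (c : config n)
  (i : 'I_n) (k : 'I_(2 * i + 1)) : R := if c i k then b else a.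

Definition eff_res {R : realType} (a b : R) (n : nat) (c : config n) : R :=
  \sum_(i < n) (\sum_(k < 2 * i + 1) (resist a b c k)^-1)^-1.

(* The resistances are i.i.d. with law (delta_a + delta_b)/2, i.e. the
   configuration is uniformly distributed on the finite set config n. *)
Definition expect {R : realType} (n : nat) (X : config n -> R) : R :=
  (\sum_(c : config n) X c) / #|config n|%:R.

Definition ER {R : realType} (a b : R) (n : nat) : R :=
  expect (eff_res a b (n := n)).

Definition VarR {R : realType} (a b : R) (n : nat) : R :=
  expect (fun c : config n => (eff_res a b c - ER a b n) ^+ 2).

Definition bigTheta {R : realType} (f g : nat -> R) : Prop :=
  exists c C : R, exists N : nat, 0 < c /\ c <= C /\
    forall n : nat, (N <= n)%N -> c * g n <= f n /\ f n <= C * g n.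

(* Main.v *)
Require Import Defs.
From HB Require Import structures.
From mathcomp Require Import all_boot all_order all_algebra.
From mathcomp Require Import reals exp.
From mathcomp Require Import ring lra zify.
Import Order.TTheory GRing.Theory Num.Theory.
Local Open Scope ring_scope.
Set Implicit Arguments. Unset Strict Implicit.
Unset Printing Implicit Defensive.

Definition xorf m (y x : {ffun 'I_m -> bool}) : {ffun 'I_m -> bool} :=
  [ffun k => addb (y k) (x k)].
Lemma xorfK m (x y : {ffun 'I_m -> bool}) : xorf (xorf y x) x = y.
Proof. by apply/ffunP=> k; rewrite !ffunE; case: (y k); case: (x k). Qed.
Lemma xorfK' m (x y : {ffun 'I_m -> bool}) : xorf y (xorf y x) = x.
Proof. by apply/ffunP=> k; rewrite !ffunE; case: (y k); case: (x k). Qed.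

Lemma card_T_gt0 (m : nat) : (0 < #|{ffun 'I_m -> bool}|)%N.
Proof. by apply/card_gt0P; exists [ffun => false]. Qed.

Section Avg.
Variable (R : realType) (n : nat).

Definition upd (i : 'I_n) (x : {ffun 'I_(2*i+1) -> bool}) (c : config n) : config n :=
  [ffun j => dfwith (fun j => c j) (xorf (c i) x) j].

Lemma upd_in i x c : upd x c i = xorf (c i) x.
Proof. by rewrite /upd ffunE dfwith_in. Qed.
Lemma upd_out (i : 'I_n) (x : {ffun 'I_(2*i+1) -> bool}) c j : i != j -> upd x c j = c j.
Proof. by move=> ij; rewrite /upd ffunE dfwith_out. Qed.
Lemma updK (i : 'I_n) (x : {ffun 'I_(2*i+1) -> bool}) : involutive (upd x).
Proof.
move=> c; apply/ffunP=> j; case: (eqVneq i j) => [<-|ij].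
  by rewrite !upd_in xorfK.
by rewrite !upd_out.
Qed.


Lemma avg (i : 'I_n) (h : {ffun 'I_(2*i+1) -> bool} -> R) (G : config n -> R) :
  (forall (x : {ffun 'I_(2*i+1) -> bool}) c, G (upd x c) = G c) ->
  \sum_(c : config n) h (c i) * G c =
    (\sum_y h y) / #|{ffun 'I_(2*i+1) -> bool}|%:R * \sum_(c : config n) G c.
Proof.
move=> HG.
have E x : \sum_(c : config n) h (c i) * G c = \sum_(c : config n) h (xorf (c i) x) * G c.
  rewrite (reindex_inj (can_inj (updK x))); apply: eq_bigr => c _.
  by rewrite upd_in HG.
have F : #|{ffun 'I_(2*i+1) -> bool}|%:R * \sum_(c : config n) h (c i) * G c =
   (\sum_y h y) * \sum_(c : config n) G c.
  rewrite (_ : _ * _ = \sum_(x : {ffun 'I_(2*i+1) -> bool}) \sum_(c : config n) h (xorf (c i) x) * G c); last first.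
    transitivity (\sum_(x : {ffun 'I_(2*i+1) -> bool}) \sum_(c : config n) h (c i) * G c).
      by rewrite sumr_const mulr_natl.
    by apply: eq_bigr => x _; rewrite -E.
  rewrite exchange_big mulr_sumr; apply: eq_bigr => c _.
  rewrite -mulr_suml; congr (_ * _).
  by rewrite (reindex_inj (can_inj (fun x => xorfK' x (c i)))); apply: eq_bigr => x _; rewrite xorfK'.
have Tpos : (#|{ffun 'I_(2*i+1) -> bool}|%:R : R) != 0.
  by rewrite pnatr_eq0 -lt0n card_T_gt0.
by rewrite mulrAC -F mulrC mulKf.
Qed.
End Avg.

Lemma card_config_gt0 n : (0 < #|config n|)%N.
Proof.
apply/card_gt0P.
by exists (@finfun _ (fun i : 'I_n => {ffun 'I_(2*i+1) -> bool}) (fun i => [ffun => false])).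
Qed.

Lemma avg_le (R : realType) (F : finType) (f : F -> R) (L U : R) :
  (0 < #|F|)%N -> (forall y, L <= f y <= U) ->
  L <= (\sum_y f y) / #|F|%:R <= U.
Proof.
move=> F0 Hf; have cF : (0 : R) < #|F|%:R by rewrite ltr0n.
apply/andP; split.
  rewrite ler_pdivlMr // mulr_natr -sumr_const; apply: ler_sum => y _.
  by case/andP: (Hf y).
rewrite ler_pdivrMr // mulr_natr -sumr_const; apply: ler_sum => y _.
by case/andP: (Hf y).
Qed.

Lemma lnge1 (R : realType) (x : R) : 0 < x -> 1 - x^-1 <= ln x.
Proof.
move=> x0.
have xi : 0 < x^-1 by rewrite invr_gt0.
have H : ln (1 + (x^-1 - 1)) <= x^-1 - 1 by apply: le_ln1Dx; lra.
rewrite addrCA subrr addr0 lnV ?posrE // in H; lra.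
Qed.

Lemma harm_lo (R : realType) n : ln (n.+1%:R : R) <= \sum_(i < n) (i.+1%:R)^-1.
Proof.
elim: n => [|n IH]; first by rewrite big_ord0 ln1.
rewrite big_ord_recr /=.
have p1 : (0 : R) < n.+1%:R by rewrite ltr0n.
have p2 : (0 : R) < 1 + (n.+1%:R)^-1 by rewrite ltr_pwDl // invr_ge0 ltW.
have -> : ln (n.+2%:R : R) = ln (n.+1%:R) + ln (1 + (n.+1%:R)^-1).
  rewrite -lnM ?posrE //; congr ln.
  rewrite mulrDr mulr1 mulfV ?gt_eqF //.
  by rewrite -natr1.
apply: lerD => //; apply: le_ln1Dx.
have : 0 < (n.+1%:R : R)^-1 by rewrite invr_gt0.
move: (n.+1%:R : R)^-1 => y ?; lra.
Qed.

Lemma harm_hi (R : realType) n : \sum_(i < n.+1) (i.+1%:R : R)^-1 <= 1 + ln (n.+1%:R).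
Proof.
elim: n => [|n IH]; first by rewrite big_ord1 ln1 invr1 addr0.
rewrite big_ord_recr /=.
have p1 : (0 : R) < n.+2%:R by rewrite ltr0n.
have q : 0 < (n.+2%:R : R)^-1 < 1.
  by rewrite invr_gt0 p1 /= invf_lt1 // ltr1n.
have p2 : (0 : R) < 1 - (n.+2%:R)^-1 by rewrite subr_gt0; case/andP: q.
have E : ln (n.+1%:R : R) = ln (n.+2%:R) + ln (1 + - (n.+2%:R)^-1).
  rewrite -lnM ?posrE //; congr ln.
  rewrite mulrDr mulr1 mulrN mulfV ?gt_eqF //.
  by rewrite -[in RHS]natr1 addrK.
have L : ln (1 + - (n.+2%:R : R)^-1) <= - (n.+2%:R)^-1.
  by apply: le_ln1Dx; rewrite ltrN2; case/andP: q.
move: IH E L; move: (n.+2%:R : R)^-1 => y IH E L; lra.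
Qed.

Lemma sq_sum (R : realType) n :
  \sum_(i < n.+1) (((2*i+1)%:R : R)^-1) ^+ 2 + (n.+1%:R)^-1 <= 2.
Proof.
elim: n => [|n IH].
  rewrite big_ord1 /= (_ : ((2 * 0 + 1)%:R : R) = 1) // invr1 expr1n.
  by rewrite (_ : (1 : R) + 1 = 2).
rewrite big_ord_recr /=.
apply: le_trans IH; rewrite -addrA lerD2l.
have E1 : ((2 * n.+1 + 1)%:R : R) = 2 * n%:R + 3.
  rewrite (_ : (2 * n.+1 + 1 = 2 * n + 3)%N); last by lia.
  by rewrite natrD natrM.
have E2 : (n.+2%:R : R) = n%:R + 2 by rewrite -addn2 natrD.
have E3 : (n.+1%:R : R) = n%:R + 1 by rewrite -addn1 natrD.
rewrite E1 E2 E3.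
have x0 : (0 : R) <= n%:R by rewrite ler0n.
move: x0; move: (n%:R : R) => x x0.
have h1 : x + 1 != 0 by rewrite gt_eqF //; lra.
have h2 : x + 2 != 0 by rewrite gt_eqF //; lra.
have h3 : 2 * x + 3 != 0 by rewrite gt_eqF //; lra.
rewrite -subr_ge0.
have -> : (x + 1)^-1 - ((2 * x + 3)^-1 ^+ 2 + (x + 2)^-1) =
   (3 * x ^+ 2 + 9 * x + 7) / ((x + 1) * (x + 2) * (2 * x + 3) ^+ 2).
  by field; rewrite h1 h2 h3.
apply: divr_ge0.
  nra.
apply: mulr_ge0; last exact: sqr_ge0.
nra.
Qed.

Section Main.
Variables (R : realType) (a b : R).
Hypotheses (ha : 0 < a) (hab : a < b).

Definition hh (i : nat) (y : {ffun 'I_(2*i+1) -> bool}) : R :=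
  (\sum_(k < 2*i+1) (if y k then b else a)^-1)^-1.
Definition cT (i : nat) : R := #|{ffun 'I_(2*i+1) -> bool}|%:R.
Definition mm (i : nat) : R := (\sum_(y : {ffun 'I_(2*i+1) -> bool}) hh y) / cT i.
Definition vv (i : nat) : R :=
  (\sum_(y : {ffun 'I_(2*i+1) -> bool}) (hh y - mm i) ^+ 2) / cT i.

Lemma cT_neq0 i : cT i != 0.
Proof. by rewrite /cT pnatr_eq0 -lt0n card_T_gt0. Qed.

Lemma expect_mul n (i : 'I_n) (f : {ffun 'I_(2*i+1) -> bool} -> R) (G : config n -> R) :
  (forall (x : {ffun 'I_(2*i+1) -> bool}) c, G (upd x c) = G c) ->
  expect (fun c => f (c i) * G c) = (\sum_y f y) / cT i * expect G.
Proof. by move=> HG; rewrite /expect avg // mulrA. Qed.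

Lemma expect1 n (i : 'I_n) (f : {ffun 'I_(2*i+1) -> bool} -> R) :
  expect (fun c : config n => f (c i)) = (\sum_y f y) / cT i.
Proof.
have -> : expect (fun c : config n => f (c i)) = expect (fun c => f (c i) * 1).
  by rewrite /expect; congr (_ / _); apply: eq_bigr => c _; rewrite mulr1.
rewrite (@expect_mul _ i _ (fun _ => 1)) // /expect sumr_const. rewrite divff ?mulr1 //.
by rewrite pnatr_eq0 -lt0n (card_config_gt0 n).
Qed.

Lemma expect_sum n (I : finType) (F : I -> config n -> R) :
  expect (fun c => \sum_j F j c) = \sum_j expect (F j).
Proof. by rewrite /expect exchange_big mulr_suml. Qed.

Lemma ER_eq n : ER a b n = \sum_(i < n) mm i.
Proof.
rewrite /ER.
change (expect (fun c : config n => \sum_(i < n) hh (c i)) = \sum_(i < n) mm i).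
rewrite expect_sum; apply: eq_bigr => i _.
by rewrite (@expect1 _ i (fun y => hh y)).
Qed.

Lemma VarR_eq n : VarR a b n = \sum_(i < n) vv i.
Proof.
transitivity (expect (fun c : config n => \sum_(i < n) \sum_(j < n)
   (hh (c i) - mm i) * (hh (c j) - mm j))).
  rewrite /VarR /expect ER_eq; congr (_ / _); apply: eq_bigr => c _.
  change ((\sum_(i < n) hh (c i) - \sum_(i < n) mm i) ^+ 2 =
    \sum_(i < n) \sum_(j < n) (hh (c i) - mm i) * (hh (c j) - mm j)).
  rewrite -sumrB expr2 mulr_suml; apply: eq_bigr => i _; by rewrite mulr_sumr.
rewrite expect_sum; apply: eq_bigr => i _; rewrite expect_sum.
rewrite (bigD1 i) //= big1 ?addr0.
  by rewrite (@expect1 _ i (fun y => (hh y - mm i) * (hh y - mm i))) /vv; 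
     congr (_ / _); apply: eq_bigr => y _; rewrite expr2.
move=> j ji.
rewrite (@expect_mul _ i (fun y => hh y - mm i) (fun c => hh (c j) - mm j)).
  rewrite sumrB sumr_const /mm -mulr_natr mulfVK ?cT_neq0 // subrr.
  by rewrite !mul0r.
by move=> x c; rewrite upd_out // eq_sym.
Qed.


Lemma hh_bounds i (y : {ffun 'I_(2*i+1) -> bool}) :
  a / (2*i+1)%:R <= hh y <= b / (2*i+1)%:R.
Proof.
have b0 : 0 < b by apply: lt_trans hab.
have w0 : (0 : R) < (2*i+1)%:R by rewrite ltr0n addn1.
rewrite /hh; set s := \sum_(k < 2*i+1) _.
have s1 : s <= (2*i+1)%:R * a^-1.
  rewrite mulr_natl -[X in _ *+ X](card_ord (2*i+1)) -sumr_const.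
  apply: ler_sum => k _; case: (y k) => //.
  by rewrite lef_pV2 ?posrE ?ltW.
have s2 : (2*i+1)%:R * b^-1 <= s.
  rewrite mulr_natl -[X in _ *+ X](card_ord (2*i+1)) -sumr_const.
  apply: ler_sum => k _; case: (y k) => //.
  by rewrite lef_pV2 ?posrE ?ltW.
have p1 : 0 < (2*i+1)%:R * a^-1 by rewrite mulr_gt0 ?invr_gt0.
have p2 : 0 < (2*i+1)%:R * b^-1 by rewrite mulr_gt0 ?invr_gt0.
have s0 : 0 < s by apply: lt_le_trans s2.
have ea : a / (2*i+1)%:R = ((2*i+1)%:R * a^-1)^-1 by rewrite invfM invrK mulrC.
have eb : b / (2*i+1)%:R = ((2*i+1)%:R * b^-1)^-1 by rewrite invfM invrK mulrC.
rewrite ea eb.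
by rewrite !lef_pV2 ?posrE // s1 s2.
Qed.

Lemma mm_bounds i : a / (2*i+1)%:R <= mm i <= b / (2*i+1)%:R.
Proof. by apply: avg_le; [apply: card_T_gt0 | apply: hh_bounds]. Qed.

Lemma vv_ge0 i : 0 <= vv i.
Proof. by rewrite /vv divr_ge0 ?ler0n // sumr_ge0 // => y _; rewrite sqr_ge0. Qed.

Lemma vv_le i : vv i <= ((b - a) / (2*i+1)%:R) ^+ 2.
Proof.
have H : forall y : {ffun 'I_(2*i+1) -> bool},
    0 <= (hh y - mm i) ^+ 2 <= ((b - a) / (2*i+1)%:R) ^+ 2.
  move=> y; rewrite sqr_ge0 /=.
  have /andP[h1 h2] := hh_bounds y; have /andP[m1 m2] := mm_bounds i.
  rewrite mulrBl.
  move: h1 h2 m1 m2; move: (a / _) (b / _) (hh y) (mm i) => p q h m h1 h2 m1 m2.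
  nra.
by case/andP: (avg_le (card_T_gt0 _) H).
Qed.

Lemma vv0 : (b - a) ^+ 2 / 4 <= vv 0.
Proof.
rewrite /vv.
pose y1 : {ffun 'I_(2*0+1) -> bool} := [ffun => false].
pose y2 : {ffun 'I_(2*0+1) -> bool} := [ffun => true].
have ne : y2 != y1 by apply/eqP => /ffunP /(_ ord0); rewrite !ffunE.
have e1 : hh y1 = a.
  rewrite /hh (eq_bigr (fun _ => a^-1)) => [|k _]; last by rewrite ffunE.
  by rewrite sumr_const card_ord mulr1n invrK.
have e2 : hh y2 = b.
  rewrite /hh (eq_bigr (fun _ => b^-1)) => [|k _]; last by rewrite ffunE.
  by rewrite sumr_const card_ord mulr1n invrK.
have c2 : cT 0 = 2 by rewrite /cT card_ffun card_bool card_ord.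
rewrite c2 (bigD1 y1) //= (bigD1 y2) //=.
set r := \sum_(i | _) _.
have r0 : 0 <= r by rewrite sumr_ge0 // => y _; rewrite sqr_ge0.
rewrite e1 e2.
have := sqr_ge0 (a + b - 2 * mm 0).
move: r0; move: r (mm 0) => r m r0 sq.
nra.
Qed.

End Main.

Lemma ln_ge1 (R : realType) n : (4 <= n)%N -> 1 <= ln (n%:R : R).
Proof.
move=> n4.
have h2 := @lnge1 R 2 (ltr0n R 2).
have e4 : ((4%:R : R)) = 2 ^+ 2 by rewrite expr2; ring.
have l4 : ln (4%:R : R) <= ln (n%:R : R).
  by rewrite ler_ln ?posrE ?ltr0n ?ler_nat //; lia.
rewrite e4 lnXn // in l4.
have : (2 : R)^-1 = 1 / 2 by rewrite div1r.
move: h2 l4; move: (ln 2) => l h2 l4 e.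
rewrite e in h2; lra.
Qed.

Lemma inv_w_le (R : realType) (i : nat) : ((2*i+1)%:R : R)^-1 <= (i.+1%:R)^-1.
Proof. by rewrite lef_pV2 ?posrE ?ltr0n ?ler_nat //; lia. Qed.

Lemma inv_w_ge (R : realType) (i : nat) : 2^-1 * (i.+1%:R : R)^-1 <= ((2*i+1)%:R)^-1.
Proof.
rewrite -invfM (_ : (2 : R) * i.+1%:R = (2 * i.+1)%:R); last by rewrite natrM.
by rewrite lef_pV2 ?posrE ?ltr0n ?ler_nat //; lia.
Qed.

Unset Implicit Arguments.

Theorem proposition2 (R : realType) (a b : R) (ha : 0 < a) (hab : a < b) :
  bigTheta (ER a b) (fun n : nat => ln (n%:R : R)) /\
  bigTheta (VarR a b) (fun _ : nat => 1 : R).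
Proof.
have b0 : 0 < b by apply: lt_trans hab.
split.
  exists (a / 2), (2 * b), 4%N; split; first by rewrite divr_gt0.
  split; first lra.
  move=> n n4 /=; rewrite ER_eq.
  set H := \sum_(i < n) ((2*i+1)%:R : R)^-1.
  have S1 : a * H <= \sum_(i < n) mm a b i.
    rewrite /H mulr_sumr; apply: ler_sum => i _.
    by case/andP: (mm_bounds ha hab i).
  have S2 : \sum_(i < n) mm a b i <= b * H.
    rewrite /H mulr_sumr; apply: ler_sum => i _.
    by case/andP: (mm_bounds ha hab i).
  have H1 : 2^-1 * \sum_(i < n) (i.+1%:R : R)^-1 <= H.
    by rewrite mulr_sumr; apply: ler_sum => i _; apply: inv_w_ge.
  have H2 : H <= \sum_(i < n) (i.+1%:R : R)^-1.
    by apply: ler_sum => i _; apply: inv_w_le.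
  have L1 := harm_lo R n.
  have L0 : ln (n%:R : R) <= ln (n.+1%:R).
    by rewrite ler_ln ?posrE ?ltr0n ?ler_nat //; lia.
  have L3 := ln_ge1 R n4.
  case: n n4 H S1 S2 H1 H2 L1 L0 L3 => [//|n'] n4 H S1 S2 H1 H2 L1 L0 L3.
  have L2 := harm_hi R n'.
  split.
    have : 2^-1 * ln (n'.+1%:R : R) <= H.
      apply: le_trans H1; rewrite ler_pM2l ?invr_gt0 //; apply: le_trans L1.
      exact: L0.
    move=> K; apply: le_trans S1.
    apply: le_trans (ler_wpM2l (ltW ha) K); by rewrite mulrA.
  apply: (le_trans S2); rewrite [2 * b]mulrC -mulrA ler_pM2l //.
  move: H2 L2 L3; move: (\sum_(i < n'.+1) _) (ln _) => s l; lra.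
exists ((b - a) ^+ 2 / 4), (2 * (b - a) ^+ 2), 1%N.
have d0 : 0 < (b - a) ^+ 2 by rewrite exprn_gt0 // subr_gt0.
split; first by rewrite divr_gt0.
split.
  move: d0; move: ((b - a) ^+ 2) => d d0; lra.
case=> [//|n] _ /=; rewrite VarR_eq !mulr1; split.
  rewrite big_ord_recl; apply: (@le_trans _ _ (vv a b 0)); first exact: vv0.
  rewrite lerDl; apply: sumr_ge0 => i _; exact: vv_ge0.
apply: (@le_trans _ _ (\sum_(i < n.+1) ((b - a) / (2*i+1)%:R) ^+ 2)).
  by apply: ler_sum => i _; apply: vv_le.
under eq_bigr do rewrite exprMn.
rewrite -mulr_sumr [2 * _]mulrC ler_pM2l //.
have := sq_sum R n.
have : 0 < (n.+1%:R : R)^-1 by rewrite invr_gt0 ltr0n.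
move: (n.+1%:R : R)^-1 (\sum_(i < n.+1) _) => y s; lra.
Qed.
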